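(* Let $(\nu_n)_{n=1}^\infty$ be an increasing sequence of positive integers and let $\alpha=\liminf_{n\to\infty}\frac{\nu_n}{n}\in[0,\infty]$. Let \[F((\nu_n)_{n=1}^\infty)=\{x\in J\colon a_{n}(x),\ldots,a_{n+\nu_n-1}(x)\ \text{is an arithmetic progression for infinitely many}\ n\geq1\}.\] Then $\dim_{\rm H} F((\nu_n)_{n=1}^\infty)\ge \frac{1}{2(1+\alpha)}$ (interpreted as $0$ when $\alpha=\infty$).
   Context: Every irrational $x\in(0,1)$ has a regular continued fraction expansion with partial quotients $a_n(x)\in\mathbb N$, $n\ge1$. $J=\{x\in(0,1)\setminus\mathbb Q\colon a_n(x)<a_{n+1}(x)\text{ for every }n\ge1\}$. $\dim_{\rm H}$ denotes Hausdorff dimension in $[0,1]$. *)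

(* Defs.v *)
From Stdlib Require Import Reals QArith ZArith Lra Lia.
From Coquelicot Require Import Coquelicot.
Open Scope R_scope.

Definition irrational (x : R) : Prop := ~ exists q : Q, x = Q2R q.

Definition gauss (x : R) : R := / x - IZR (Int_part (/ x)).

(** Partial quotient a_n(x) for n >= 1: a_n(x) = floor(1 / T^(n-1) x).
    (The value at n = 0 is irrelevant and never used.) *)
Definition cf_digit (x : R) (n : nat) : nat :=
  Z.to_nat (Int_part (/ (Nat.iter (n - 1) gauss x))).

Definition J (x : R) : Prop :=
  0 < x < 1 /\ irrational x /\
  forall n : nat, (1 <= n)%nat -> (cf_digit x n < cf_digit x (n + 1))%nat.

Definition cf_AP (x : R) (n len : nat) : Prop :=
  forall i : nat, (i + 2 <= len)%nat ->
    (Z.of_nat (cf_digit x (n + i + 1)) - Z.of_nat (cf_digit x (n + i)))%Z =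
    (Z.of_nat (cf_digit x (n + i + 2)) - Z.of_nat (cf_digit x (n + i + 1)))%Z.

Definition F_set (nu : nat -> nat) (x : R) : Prop :=
  J x /\ forall N : nat, exists n : nat, (1 <= n)%nat /\ (N <= n)%nat /\ cf_AP x n (nu n).

(** diameter of a subset of R (m_infty for the empty set, p_infty if unbounded) *)
Definition diam (U : R -> Prop) : Rbar :=
  Rbar_lub (fun t => exists x y, U x /\ U y /\ t = Finite (Rabs (x - y))).

Definition rpow (d s : R) : R :=
  if Req_EM_T s 0 then 1 else if Req_EM_T d 0 then 0 else Rpower d s.

(** |U|^s, with |empty|^s = 0 (only used for sets of finite diameter) *)
Definition hterm (s : R) (U : R -> Prop) : R :=
  match diam U with Finite d => rpow d s | _ => 0 end.

Definition cover_sum (s : R) (U : nat -> R -> Prop) : Rbar :=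
  Rbar_lub (fun t => exists n, t = Finite (sum_n (fun i => hterm s (U i)) n)).

Definition hausdorff_delta (s delta : R) (E : R -> Prop) : Rbar :=
  Rbar_glb (fun t => exists U : nat -> R -> Prop,
    (forall x, E x -> exists i, U i x) /\
    (forall i, Rbar_le (diam (U i)) (Finite delta)) /\
    t = cover_sum s U).

(** s-dimensional Hausdorff measure: H^s(E) = lim_(delta -> 0+) H^s_delta(E)
    = sup_(delta > 0) H^s_delta(E) *)
Definition hausdorff_measure (s : R) (E : R -> Prop) : Rbar :=
  Rbar_lub (fun t => exists delta, 0 < delta /\ t = hausdorff_delta s delta E).

Definition hausdorff_dim (E : R -> Prop) : Rbar :=
  Rbar_glb (fun t => exists s, 0 <= s /\ t = Finite s /\
                              hausdorff_measure s E = Finite 0).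

Definition dim_bound (alpha : Rbar) : R :=
  match alpha with
  | Finite a => 1 / (2 * (1 + a))
  | p_infty => 0
  | m_infty => 0
  end.

(* Main.v *)
Require Import Defs.
From Stdlib Require Import Reals QArith ZArith Lra Lia List ClassicalEpsilon.
From Coquelicot Require Import Coquelicot.
Open Scope R_scope.

Section Cov.
Variables p r : nat -> R.
Hypothesis Hr : forall i, 0 <= r i.

Definition sumL (l : list nat) : R := fold_right (fun i acc => 2 * r i + acc) 0 l.

Lemma sumL_nonneg l : 0 <= sumL l.
Proof. induction l; simpl. lra. pose proof (Hr a). lra. Qed.

Lemma sumL_remove j l : In j l -> sumL (remove Nat.eq_dec j l) + 2 * r j <= sumL l.
Proof.
  induction l as [|a l IH]; intro Hin; simpl. destruct Hin.
  destruct (Nat.eq_dec j a) as [E|E].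
  - subst. destruct (in_dec Nat.eq_dec a l) as [Hi|Hi].
    + pose proof (IH Hi). pose proof (Hr a). lra.
    + rewrite notin_remove by auto. lra.
  - simpl. destruct Hin as [Hin|Hin]. congruence. pose proof (IH Hin). lra.
Qed.

Lemma cover_finite_aux : forall n (l : list nat), (length l <= n)%nat -> forall x, 0 <= x ->
  (forall t, 0 <= t <= x -> exists i, In i l /\ Rabs (t - p i) < r i) -> x <= sumL l.
Proof.
  induction n as [|n IH]; intros l Hlen x Hx Hcov.
  - destruct (Hcov x ltac:(lra)) as [i [Hi _]]. destruct l. destruct Hi. simpl in Hlen. lia.
  - destruct (Hcov x ltac:(lra)) as [j [Hj Hxj]].
    pose proof (sumL_remove j l Hj) as Hrem.
    pose proof (sumL_nonneg (remove Nat.eq_dec j l)).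
    destruct (Rle_dec (p j - r j) 0) as [Hle|Hgt].
    + apply Rabs_def2 in Hxj. lra.
    + assert (IHa : p j - r j <= sumL (remove Nat.eq_dec j l)).
      { apply IH.
        - pose proof (remove_length_lt Nat.eq_dec l j Hj). lia.
        - lra.
        - intros t Ht. apply Rabs_def2 in Hxj.
          destruct (Hcov t ltac:(lra)) as [i [Hi Hti]].
          exists i. split; auto. apply in_in_remove; auto.
          intro E; subst i. apply Rabs_def2 in Hti. lra. }
      apply Rabs_def2 in Hxj. lra.
Qed.

Lemma cover_compact (b : R) : 0 <= b ->
  (forall t, 0 <= t <= b -> exists i, Rabs (t - p i) < r i) ->
  exists n, forall t, 0 <= t <= b -> exists i, (i < n)%nat /\ Rabs (t - p i) < r i.
Proof.
  intros Hb Hcov.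
  set (E := fun x => 0 <= x <= b /\ exists n, forall t, 0 <= t <= x ->
                    exists i, (i < n)%nat /\ Rabs (t - p i) < r i).
  assert (E0 : E 0).
  { split. lra. destruct (Hcov 0 ltac:(lra)) as [i Hi]. exists (S i).
    intros t Ht. exists i. split. lia. replace t with 0 by lra. auto. }
  assert (HbE : bound E). { exists b. intros x [Hx _]. lra. }
  destruct (completeness E HbE (ex_intro _ 0 E0)) as [c [Hub Hleast]].
  assert (Hc0 : 0 <= c) by (apply Hub; auto).
  assert (Hcb : c <= b) by (apply Hleast; intros x [Hx _]; lra).
  destruct (Hcov c ltac:(lra)) as [j Hj].
  set (d := r j - Rabs (c - p j)).
  assert (Hd : 0 < d) by (unfold d; lra).
  assert (Hx : exists x, E x /\ c - d < x).
  { apply Classical_Prop.NNPP. intro Hno.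
    assert (c <= c - d). { apply Hleast. intros x Ex. apply Rnot_lt_le. intro Hlt. apply Hno. eauto. }
    lra. }
  destruct Hx as [x [[Hx1 [n Hn]] Hxc]].
  set (y := Rmin b (c + d / 2)).
  assert (Ey : E y).
  { split. unfold y. split. apply Rmin_glb; lra. apply Rmin_l.
    exists (Nat.max n (S j)). intros t Ht.
    destruct (Rle_dec t x) as [Htx|Htx].
    - destruct (Hn t ltac:(lra)) as [i [Hi1 Hi2]]. exists i. split. lia. auto.
    - exists j. split. lia.
      assert (t <= c + d / 2) by (pose proof (Rmin_r b (c + d/2)); unfold y in Ht; lra).
      assert (Rabs (t - c) < d) by (apply Rabs_def1; lra).
      pose proof (Rabs_triang (t - c) (c - p j)).
      replace (t - c + (c - p j)) with (t - p j) in * by ring. unfold d in *. lra. }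
  assert (Hyc : y <= c) by (apply Hub; auto).
  assert (Hyb : y = b).
  { unfold y in *. unfold Rmin in *. destruct (Rle_dec b (c + d / 2)); lra. }
  destruct Ey as [_ [m Hm]]. exists m. rewrite Hyb in Hm. auto.
Qed.

Lemma cover_length (b : R) : 0 <= b ->
  (forall t, 0 <= t <= b -> exists i, Rabs (t - p i) < r i) ->
  exists n, b <= sumL (seq 0 n).
Proof.
  intros Hb Hcov. destruct (cover_compact b Hb Hcov) as [n Hn]. exists n.
  apply (cover_finite_aux (length (seq 0 n))); auto.
  intros t Ht. destruct (Hn t Ht) as [i [Hi1 Hi2]]. exists i. split; auto.
  apply in_seq. lia.
Qed.

End Cov.

Definition hh (a : nat) (y : R) : R := / (INR a + y).

Lemma INR_ge2 (a : nat) : (2 <= a)%nat -> 2 <= INR a.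
Proof. intro H. apply le_INR in H. simpl in H. lra. Qed.

Lemma hh_range a y : (2 <= a)%nat -> 0 <= y <= 1 -> 0 < hh a y <= /2.
Proof.
  intros Ha Hy. pose proof (INR_ge2 a Ha). unfold hh. split.
  - apply Rinv_0_lt_compat; lra.
  - apply Rinv_le_contravar; lra.
Qed.

Lemma hh_diff a u v : (2 <= a)%nat -> 0 <= u -> 0 <= v ->
  hh a u - hh a v = (v - u) / ((INR a + u) * (INR a + v)).
Proof.
  intros Ha Hu Hv. pose proof (INR_ge2 a Ha). unfold hh. field. lra.
Qed.

Lemma hh_lip a u v : (2 <= a)%nat -> 0 <= u -> 0 <= v ->
  Rabs (hh a u - hh a v) <= / 4 * Rabs (u - v).
Proof.
  intros Ha Hu Hv. pose proof (INR_ge2 a Ha). rewrite hh_diff by auto.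
  unfold Rdiv. rewrite Rabs_mult, Rabs_inv.
  rewrite (Rabs_pos_eq ((INR a + u) * (INR a + v))) by (apply Rmult_le_pos; lra).
  rewrite <- Rabs_Ropp, Ropp_minus_distr.
  rewrite Rmult_comm. apply Rmult_le_compat_r. apply Rabs_pos.
  apply Rinv_le_contravar; nra.
Qed.

Lemma hh_lowlip a u v (B : R) : (2 <= a)%nat -> 0 <= u <= 1 -> 0 <= v <= 1 ->
  INR a + 1 <= B ->
  / (B * B) * Rabs (u - v) <= Rabs (hh a u - hh a v).
Proof.
  intros Ha Hu Hv HB. pose proof (INR_ge2 a Ha). rewrite hh_diff; [|auto|lra|lra].
  unfold Rdiv. rewrite Rabs_mult, Rabs_inv.
  rewrite (Rabs_pos_eq ((INR a + u) * (INR a + v))) by (apply Rmult_le_pos; lra).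
  rewrite <- Rabs_Ropp, Ropp_minus_distr.
  rewrite Rmult_comm. apply Rmult_le_compat_l. apply Rabs_pos.
  apply Rinv_le_contravar. nra. apply Rmult_le_compat; lra.
Qed.

Section Seq.
Variable a : nat -> nat.
Hypothesis Ha : forall i, (2 <= a i)%nat.

Fixpoint comp (n m : nat) : R :=
  match m with
  | O => 0
  | S m' => hh (a (S n)) (comp (S n) m')
  end.

Lemma comp_range n m : 0 <= comp n m <= /2.
Proof.
  revert n; induction m; intro n; simpl.
  - lra.
  - pose proof (hh_range (a (S n)) (comp (S n) m) (Ha _)) as H.
    specialize (IHm (S n)). lra.
Qed.

Lemma comp_cauchy m p n : Rabs (comp n m - comp n (m + p)) <= (/4) ^ m.
Proof.
  revert n; induction m; intro n; simpl.
  - pose proof (comp_range n p). rewrite Rabs_left1 by lra. lra.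
  - pose proof (comp_range (S n) m). pose proof (comp_range (S n) (m+p)).
    eapply Rle_trans. apply hh_lip; auto; lra.
    apply Rmult_le_compat_l. lra. apply IHm.
Qed.

Lemma comp_cv n : ex_finite_lim_seq (comp n).
Proof.
  apply ex_lim_seq_cauchy_corr. intro eps.
  destruct (pow_lt_1_zero (/4) ltac:(rewrite Rabs_pos_eq; lra) eps (cond_pos eps)) as [N HN].
  exists N.
  assert (Hmon : forall k, (N <= k)%nat -> (/4)^k < eps).
  { intros k Hk. specialize (HN k Hk). rewrite Rabs_pos_eq in HN. auto. apply pow_le. lra. }
  intros i j Hi Hj.
  destruct (le_lt_dec i j).
  - replace j with (i + (j - i))%nat by lia.
    eapply Rle_lt_trans. apply comp_cauchy. apply Hmon; auto.
  - replace i with (j + (i - j))%nat by lia. rewrite Rabs_minus_sym.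
    eapply Rle_lt_trans. apply comp_cauchy. apply Hmon; auto.
Qed.

Definition yv (n : nat) : R := real (Lim_seq (comp n)).

Lemma yv_lim n : is_lim_seq (comp n) (yv n).
Proof.
  destruct (comp_cv n) as [l Hl]. unfold yv.
  rewrite (is_lim_seq_unique _ _ Hl). simpl. auto.
Qed.

Lemma yv_range n : 0 <= yv n <= /2.
Proof.
  pose proof (yv_lim n) as H. split.
  - apply (is_lim_seq_le (fun _ => 0) (comp n) 0 (yv n)).
    intro k; apply comp_range. apply is_lim_seq_const. auto.
  - apply (is_lim_seq_le (comp n) (fun _ => /2) (yv n) (/2)).
    intro k; apply comp_range. auto. apply is_lim_seq_const.
Qed.

Lemma yv_rec n : yv n = hh (a (S n)) (yv (S n)).
Proof.
  assert (H1 : is_lim_seq (fun m => comp n (S m)) (yv n)).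
  { apply (is_lim_seq_incr_1 (comp n)). apply yv_lim. }
  assert (H2 : is_lim_seq (fun m => comp n (S m)) (hh (a (S n)) (yv (S n)))).
  2: { apply is_lim_seq_unique in H1. apply is_lim_seq_unique in H2.
       rewrite H1 in H2. injection H2; auto. }
  simpl. apply is_lim_seq_spec. intros eps.
    pose proof (yv_lim (S n)) as H. apply is_lim_seq_spec in H.
    destruct (H eps) as [N HN]. exists N. intros k Hk.
    pose proof (comp_range (S n) k). pose proof (yv_range (S n)).
    eapply Rle_lt_trans. apply hh_lip; auto; lra.
    specialize (HN k Hk). pose proof (Rabs_pos (comp (S n) k - yv (S n))). lra.
Qed.

Lemma yv_pos n : 0 < yv n.
Proof.
  rewrite yv_rec. pose proof (yv_range (S n)). apply hh_range; auto. lra.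
Qed.

Lemma Int_part_shift (z : Z) (r : R) : 0 <= r < 1 -> Int_part (IZR z + r) = z.
Proof.
  intro H. unfold Int_part.
  rewrite <- (tech_up (IZR z + r) (z + 1)). ring.
  rewrite plus_IZR. lra. rewrite plus_IZR. lra.
Qed.

Lemma inv_yv n : / yv n = INR (a (S n)) + yv (S n).
Proof.
  rewrite yv_rec at 1. unfold hh. rewrite Rinv_inv. auto.
Qed.

Lemma gauss_yv n : gauss (yv n) = yv (S n).
Proof.
  unfold gauss. rewrite inv_yv. rewrite INR_IZR_INZ.
  pose proof (yv_range (S n)).
  rewrite Int_part_shift by lra. ring.
Qed.

Lemma iter_yv k : Nat.iter k gauss (yv 0) = yv k.
Proof.
  induction k. reflexivity. simpl. rewrite IHk. apply gauss_yv.
Qed.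

Lemma cf_digit_yv n : (1 <= n)%nat -> cf_digit (yv 0) n = a n.
Proof.
  intro Hn. unfold cf_digit. rewrite iter_yv. rewrite inv_yv.
  replace (S (n - 1)) with n by lia. rewrite INR_IZR_INZ.
  pose proof (yv_range n). rewrite Int_part_shift by lra. apply Nat2Z.id.
Qed.

Lemma yv_not_rat_aux (Q : nat) : forall n (P : Z),
  (0 < Q)%nat -> yv n * IZR (Z.of_nat Q) = IZR P -> False.
Proof.
  induction Q as [Q IH] using lt_wf_ind. intros n P HQ HP.
  pose proof (yv_pos n) as Hp. pose proof (yv_range n) as Hr.
  assert (HQr : 0 < IZR (Z.of_nat Q)) by (apply IZR_lt; lia).
  assert (HP0 : (0 < P)%Z). { apply lt_IZR. rewrite <- HP. nra. }
  assert (HPQ : (P < Z.of_nat Q)%Z). { apply lt_IZR. rewrite <- HP. nra. }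
  apply (IH (Z.to_nat P) ltac:(lia) (S n) (Z.of_nat Q - Z.of_nat (a (S n)) * P)%Z ltac:(lia)).
  rewrite Z2Nat.id by lia.
  assert (E : yv (S n) = / yv n - INR (a (S n))) by (rewrite inv_yv; ring).
  rewrite E, minus_IZR, mult_IZR, <- INR_IZR_INZ, <- HP.
  rewrite <- !INR_IZR_INZ. field. lra.
Qed.

Lemma yv_irrational : irrational (yv 0).
Proof.
  intros [q Hq]. destruct q as [num den]. unfold Q2R in Hq. simpl in Hq.
  apply (yv_not_rat_aux (Pos.to_nat den) 0 num). lia.
  rewrite positive_nat_Z, Hq. field. apply not_0_IZR. lia.
Qed.

End Seq.

Fixpoint prodR (f : nat -> R) (j d : nat) : R :=
  match d with O => 1 | S d' => f (S j) * prodR f (S j) d' end.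

Lemma prodR_pos f j d : (forall i, 0 < f i) -> 0 < prodR f j d.
Proof.
  intro H. revert j; induction d; intro j; simpl. lra. apply Rmult_lt_0_compat; auto.
Qed.

Lemma dist_agree a b (Ha : forall i, (2 <= a i)%nat) (Hb : forall i, (2 <= b i)%nat)
  (B : nat -> R) (HB : forall i, (1 <= i)%nat -> INR (a i) + 1 <= B i) :
  forall d j, (forall i, (j < i <= j + d)%nat -> a i = b i) ->
  prodR (fun i => / (B i * B i)) j d * Rabs (yv a (j + d) - yv b (j + d))
   <= Rabs (yv a j - yv b j).
Proof.
  induction d; intros j Hag; simpl.
  - rewrite Nat.add_0_r. lra.
  - rewrite (yv_rec a Ha j), (yv_rec b Hb j).
    rewrite <- (Hag (S j)) by lia.
    pose proof (yv_range a Ha (S j)). pose proof (yv_range b Hb (S j)).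
    eapply Rle_trans. 2: { apply hh_lowlip with (B := B (S j)); auto; try lra. apply HB; lia. }
    rewrite Rmult_assoc. apply Rmult_le_compat_l.
    + left. apply Rinv_0_lt_compat. pose proof (HB (S j) ltac:(lia)). pose proof (INR_ge2 _ (Ha (S j))). nra.
    + replace (j + S d)%nat with (S j + d)%nat by lia. apply IHd.
      intros i Hi. apply Hag. lia.
Qed.

Lemma dist_base a b (Ha : forall i, (2 <= a i)%nat) (Hb : forall i, (2 <= b i)%nat)
  k (Bk : R) : (a (S k) + 2 <= b (S k))%nat -> INR (b (S k)) + 1 <= Bk ->
  / (Bk * Bk) <= Rabs (yv a k - yv b k).
Proof.
  intros Hd HB.
  rewrite (yv_rec a Ha k), (yv_rec b Hb k).
  pose proof (yv_range a Ha (S k)). pose proof (yv_range b Hb (S k)).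
  apply le_INR in Hd. rewrite plus_INR in Hd. simpl in Hd.
  pose proof (INR_ge2 _ (Ha (S k))).
  set (A := INR (a (S k))) in *. set (Bd := INR (b (S k))) in *.
  unfold hh. fold A Bd.
  set (u := yv a (S k)) in *. set (v := yv b (S k)) in *.
  assert (G1 : / (A + 1) <= / (A + u)) by (apply Rinv_le_contravar; lra).
  assert (G2 : / (Bd + v) <= / (A + 2)) by (apply Rinv_le_contravar; lra).
  assert (H3 : / (Bk * Bk) <= / (A + 1) - / (A + 2)).
  { replace (/ (A + 1) - / (A + 2)) with (/ ((A + 1) * (A + 2))) by (field; lra).
    apply Rinv_le_contravar. nra. apply Rmult_le_compat; lra. }
  assert (0 < / (Bk * Bk)) by (apply Rinv_0_lt_compat; nra). rewrite Rabs_pos_eq; lra.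
Qed.

Lemma dist_main a b (Ha : forall i, (2 <= a i)%nat) (Hb : forall i, (2 <= b i)%nat)
  (B : nat -> R) (HBa : forall i, (1 <= i)%nat -> INR (a i) + 1 <= B i)
  (HBb : forall i, (1 <= i)%nat -> INR (b i) + 1 <= B i) (HBp : forall i, 1 <= B i)
  k : (forall i, (0 < i <= k)%nat -> a i = b i) ->
  ((a (S k) + 2 <= b (S k))%nat \/ (b (S k) + 2 <= a (S k))%nat) ->
  prodR (fun i => / (B i * B i)) 0 k * / (B (S k) * B (S k)) <= Rabs (yv a 0 - yv b 0).
Proof.
  intros Hag Hd.
  assert (Hp : 0 <= prodR (fun i => / (B i * B i)) 0 k).
  { left. apply prodR_pos. intro i. pose proof (HBp i).
    apply Rinv_0_lt_compat. nra. }
  destruct Hd as [Hd|Hd].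
  - eapply Rle_trans. 2: { apply (dist_agree a b Ha Hb B HBa k 0). intros; apply Hag; lia. }
    simpl. apply Rmult_le_compat_l. auto. apply dist_base; auto. apply HBb; lia.
  - eapply Rle_trans. 2: { rewrite Rabs_minus_sym. apply (dist_agree b a Hb Ha B HBb k 0). intros; symmetry; apply Hag; lia. }
    simpl. apply Rmult_le_compat_l. auto. apply dist_base; auto. apply HBa; lia.
Qed.

Lemma rpow_nonneg d s : 0 <= rpow d s.
Proof.
  unfold rpow. destruct (Req_EM_T s 0). lra. destruct (Req_EM_T d 0). lra.
  unfold Rpower. left. apply exp_pos.
Qed.

Lemma rpow_mono x y s : 0 <= s -> 0 <= x <= y -> rpow x s <= rpow y s.
Proof.
  intros Hs Hxy. unfold rpow. destruct (Req_EM_T s 0). lra.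
  destruct (Req_EM_T x 0). destruct (Req_EM_T y 0). lra. unfold Rpower. left; apply exp_pos.
  destruct (Req_EM_T y 0). lra. apply Rle_Rpower_l; lra.
Qed.

Lemma hterm_nonneg s U : 0 <= hterm s U.
Proof. unfold hterm. destruct (diam U); try lra. apply rpow_nonneg. Qed.

Lemma lub_ub (E : Rbar -> Prop) x : E x -> Rbar_le x (Rbar_lub E).
Proof. intro H. unfold Rbar_lub. apply (proj1 (proj2_sig (Rbar_ex_lub E))). auto. Qed.

Lemma lub_least (E : Rbar -> Prop) b : (forall x, E x -> Rbar_le x b) -> Rbar_le (Rbar_lub E) b.
Proof. intro H. unfold Rbar_lub. apply (proj2 (proj2_sig (Rbar_ex_lub E))). auto. Qed.

Lemma glb_lb (E : Rbar -> Prop) x : E x -> Rbar_le (Rbar_glb E) x.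
Proof. intro H. unfold Rbar_glb. apply (proj1 (proj2_sig (Rbar_ex_glb E))). auto. Qed.

Lemma glb_greatest (E : Rbar -> Prop) b : (forall x, E x -> Rbar_le b x) -> Rbar_le b (Rbar_glb E).
Proof. intro H. unfold Rbar_glb. apply (proj2 (proj2_sig (Rbar_ex_glb E))). auto. Qed.

Lemma diam_pair U x y : U x -> U y -> Rbar_le (Finite (Rabs (x - y))) (diam U).
Proof. intros Hx Hy. unfold diam. apply lub_ub. exists x, y. auto. Qed.

Fixpoint fsum (f : nat -> R) (n : nat) : R :=
  match n with O => 0 | S n' => fsum f n' + f n' end.

Lemma fsum_sum_n f n : fsum f (S n) = sum_n f n.
Proof.
  induction n. simpl. rewrite sum_O. ring.
  rewrite sum_Sn. change (fsum f (S n) + f (S n) = plus (sum_n f n) (f (S n))).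
  rewrite IHn. reflexivity.
Qed.

Lemma sumL_seq (r : nat -> R) n : sumL r (seq 0 n) = 2 * fsum r n.
Proof.
  induction n. simpl. ring. rewrite seq_S. unfold sumL in *. rewrite fold_right_app.
  simpl.
  assert (G : forall l c, fold_right (fun i acc => 2 * r i + acc) c l
             = fold_right (fun i acc => 2 * r i + acc) 0 l + c).
  { induction l; intro c; simpl. ring. rewrite IHl. ring. }
  rewrite G, IHn. ring.
Qed.

Lemma fsum_geom (eta : R) n : fsum (fun i => eta * (/2) ^ (S i)) n = eta * (1 - (/2) ^ n).
Proof. induction n. unfold fsum. rewrite pow_O. ring. change (fsum (fun i => eta * (/2) ^ (S i)) n + eta * (/2) ^ (S n) = eta * (1 - (/2) ^ (S n))). rewrite IHn. rewrite <- tech_pow_Rmult. field. Qed.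

Lemma fsum_plus f g n : fsum (fun i => f i + g i) n = fsum f n + fsum g n.
Proof. induction n; simpl. ring. rewrite IHn. ring. Qed.

Lemma fsum_scal c f n : fsum (fun i => c * f i) n = c * fsum f n.
Proof. induction n; simpl. ring. rewrite IHn. ring. Qed.

Lemma holder_positive (E : R -> Prop) (g : R -> R) (b K s : R) :
  0 < b -> 0 < K -> 0 <= s ->
  (forall t, 0 <= t <= b -> E (g t)) ->
  (forall t t', 0 <= t <= b -> 0 <= t' <= b -> Rabs (t - t') <= K * rpow (Rabs (g t - g t')) s) ->
  hausdorff_measure s E <> Finite 0.
Proof.
  intros Hb HK Hs HE Hhol H0.
  assert (Hd1 : Rbar_le (hausdorff_delta s 1 E) (Finite 0)).
  { rewrite <- H0. unfold hausdorff_measure. apply lub_ub. exists 1. split; auto. lra. }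
  set (eps := b / (8 * K)).
  assert (Heps : 0 < eps) by (unfold eps; apply Rdiv_lt_0_compat; lra).
  assert (HU : exists U : nat -> R -> Prop, (forall x, E x -> exists i, U i x) /\
             (forall i, Rbar_le (diam (U i)) (Finite 1)) /\ Rbar_lt (cover_sum s U) (Finite eps)).
  { apply Classical_Prop.NNPP. intro Hno.
    assert (Rbar_le (Finite eps) (hausdorff_delta s 1 E)).
    { unfold hausdorff_delta. apply glb_greatest. intros x [U [H1 [H2 H3]]]. subst x.
      apply Rbar_not_lt_le. intro Hlt. apply Hno. exists U. auto. }
    pose proof (Rbar_le_trans _ _ _ H Hd1). simpl in H1. lra. }
  destruct HU as [U [Hcov [Hdiam Hsum]]].
  assert (Hpart : forall n, sum_n (fun i => hterm s (U i)) n <= eps).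
  { intro n. assert (Rbar_le (Finite (sum_n (fun i => hterm s (U i)) n)) (cover_sum s U)).
    { unfold cover_sum. apply lub_ub. exists n. auto. }
    destruct (cover_sum s U); simpl in *; lra. }
  set (eta := b / 8).
  set (p := fun i => epsilon (inhabits 0) (fun t => 0 <= t <= b /\ U i (g t))).
  set (r := fun i => K * hterm s (U i) + eta * (/2) ^ (S i)).
  assert (Hr : forall i, 0 <= r i).
  { intro i. unfold r. pose proof (hterm_nonneg s (U i)). pose proof (pow_lt (/2) (S i) ltac:(lra)).
    unfold eta. nra. }
  assert (Hc : forall t, 0 <= t <= b -> exists i, Rabs (t - p i) < r i).
  { intros t Ht. destruct (Hcov (g t) (HE t Ht)) as [i Hi]. exists i.
    assert (Hp : 0 <= p i <= b /\ U i (g (p i))).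
    { unfold p. apply epsilon_spec. exists t. auto. }
    destruct Hp as [Hp1 Hp2].
    pose proof (diam_pair (U i) (g t) (g (p i)) Hi Hp2) as Hd.
    pose proof (Hdiam i) as Hd'.
    assert (Hht : rpow (Rabs (g t - g (p i))) s <= hterm s (U i)).
    { unfold hterm. destruct (diam (U i)) as [d| |]; simpl in *; try tauto.
      apply rpow_mono; auto. split; auto. apply Rabs_pos. }
    pose proof (Hhol t (p i) Ht Hp1).
    pose proof (pow_lt (/2) (S i) ltac:(lra)).
    unfold r. assert (0 < eta * (/2) ^ (S i)) by (unfold eta; nra).
    assert (K * rpow (Rabs (g t - g (p i))) s <= K * hterm s (U i)) by (apply Rmult_le_compat_l; lra).
    lra. }
  destruct (cover_length p r Hr b ltac:(lra) Hc) as [n Hn].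
  rewrite sumL_seq in Hn. unfold r in Hn.
  rewrite fsum_plus, fsum_scal, fsum_geom in Hn.
  assert (Hf : fsum (fun i => hterm s (U i)) n <= eps).
  { destruct n. simpl. lra. rewrite fsum_sum_n. apply Hpart. }
  pose proof (pow_lt (/2) n ltac:(lra)).
  assert (K * fsum (fun i => hterm s (U i)) n <= K * eps) by (apply Rmult_le_compat_l; lra).
  assert (K * eps = b / 8) by (unfold eps; field; lra).
  unfold eta in Hn. nra.
Qed.

Lemma exp_le x y : x <= y -> exp x <= exp y.
Proof. intro H. destruct H. left; apply exp_increasing; auto. subst; lra. Qed.

Lemma ln_le x y : 0 < x -> x <= y -> ln x <= ln y.
Proof. intros H1 H2. destruct H2. left; apply ln_increasing; auto. subst; lra. Qed.

Lemma ln_ge0 x : 1 <= x -> 0 <= ln x.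
Proof. intro H. rewrite <- ln_1. apply ln_le; lra. Qed.

Lemma Int_part_bounds x : IZR (Int_part x) <= x < IZR (Int_part x) + 1.
Proof. pose proof (base_Int_part x). lra. Qed.

Lemma Int_part_unique z x : IZR z <= x < IZR z + 1 -> Int_part x = z.
Proof.
  intro H. replace x with (IZR z + (x - IZR z)) by ring. apply Int_part_shift. lra.
Qed.

Lemma Int_part_div (x : R) (N : nat) : (1 <= N)%nat ->
  (Int_part (x * INR N) / Z.of_nat N)%Z = Int_part x.
Proof.
  intro HN. set (m := Int_part x). set (p := Int_part (x * INR N)).
  pose proof (Int_part_bounds x) as Hm. pose proof (Int_part_bounds (x * INR N)) as Hp.
  fold m in Hm. fold p in Hp.
  assert (HNr : 1 <= INR N) by (apply (le_INR 1); auto).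
  rewrite INR_IZR_INZ in *.
  assert (H1 : (m * Z.of_nat N <= p)%Z).
  { assert (IZR (m * Z.of_nat N) < IZR (p + 1)).
    { rewrite mult_IZR, plus_IZR. nra. }
    apply lt_IZR in H. lia. }
  assert (H2 : (p < (m + 1) * Z.of_nat N)%Z).
  { apply lt_IZR. rewrite mult_IZR, plus_IZR. nra. }
  symmetry. apply (Z.div_unique p (Z.of_nat N) m (p - m * Z.of_nat N)). left. lia. ring.
Qed.


Section Dig.
Variable M : nat.
Hypothesis HM : (1 <= M)%nat.
Variables nu bs : nat -> nat.
Hypothesis Hbs : forall j, (bs j + nu (bs j) < bs (S j))%nat.
Hypothesis Hbs0 : (1 <= bs 0)%nat.

Lemma bs_lt j j' : (j < j')%nat -> (bs j + nu (bs j) < bs j')%nat.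
Proof.
  intro H. induction H. apply Hbs. pose proof (Hbs m). lia.
Qed.

Lemma bs_ge j : (S j <= bs j)%nat.
Proof. induction j. auto. pose proof (Hbs j). lia. Qed.

Lemma bs_inj_lt j j' : (bs j < bs j')%nat -> (j < j')%nat.
Proof.
  intro H. destruct (lt_eq_lt_dec j j') as [[E|E]|E]; auto. subst; lia.
  pose proof (bs_lt j' j E). lia.
Qed.

Definition inblk (i j : nat) : Prop := (bs j < i < bs j + nu (bs j))%nat.

Lemma inblk_unique i j j' : inblk i j -> inblk i j' -> j = j'.
Proof.
  unfold inblk. intros H1 H2. destruct (lt_eq_lt_dec j j') as [[E|E]|E]; auto.
  pose proof (bs_lt _ _ E). lia. pose proof (bs_lt _ _ E). lia.
Qed.

Lemma start_free i j : ~ inblk (bs i) j.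
Proof.
  unfold inblk. intros [H1 H2]. apply bs_inj_lt in H1. pose proof (bs_lt _ _ H1). lia.
Qed.

Definition blkb (i j : nat) : bool := Nat.ltb (bs j) i && Nat.ltb i (bs j + nu (bs j)).

Lemma blkb_spec i j : blkb i j = true <-> inblk i j.
Proof.
  unfold blkb, inblk. rewrite Bool.andb_true_iff, !Nat.ltb_lt. tauto.
Qed.

Definition fb (i : nat) : option nat := find (blkb i) (seq 0 i).

Lemma fb_some i j : fb i = Some j -> inblk i j.
Proof. intro H. apply find_some in H. apply blkb_spec. tauto. Qed.

Lemma fb_none i : fb i = None -> forall j, ~ inblk i j.
Proof.
  intros H j Hj. pose proof (find_none _ _ H j) as G.
  assert (In j (seq 0 i)). { apply in_seq. unfold inblk in Hj. pose proof (bs_ge j). lia. }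
  specialize (G H0). apply blkb_spec in Hj. congruence.
Qed.

Lemma fb_inblk i j : inblk i j -> fb i = Some j.
Proof.
  intro H. destruct (fb i) eqn:E.
  - apply fb_some in E. f_equal. eapply inblk_unique; eauto.
  - exfalso. eapply fb_none; eauto.
Qed.

Lemma fb_start j : fb (bs j) = None.
Proof.
  destruct (fb (bs j)) eqn:E; auto. apply fb_some in E. exfalso. eapply start_free; eauto.
Qed.

Definition Nn (i : nat) : nat := (i ^ M)%nat.

Lemma Nn_pos i : (1 <= i)%nat -> (1 <= Nn i)%nat.
Proof. intro H. unfold Nn. pose proof (Nat.pow_le_mono_l 1 i M H). rewrite Nat.pow_1_l in H0. auto. Qed.

Fixpoint c (i : nat) : nat := match i with O => 2 | S i' => c i' + 2 * Nn i' end.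

Lemma c_ge2 i : (2 <= c i)%nat.
Proof. induction i; simpl; lia. Qed.

Lemma c_lin n d : (1 <= n)%nat -> (c n + 2 * d <= c (n + d))%nat.
Proof.
  intro Hn. induction d. rewrite !Nat.add_0_r. lia.
  replace (n + S d)%nat with (S (n + d)) by lia. cbn [c]. pose proof (Nn_pos (n + d) ltac:(lia)). lia.
Qed.

Lemma c_mono i l : (i <= l)%nat -> (c i <= c l)%nat.
Proof. intro H. induction H. lia. cbn [c]. lia. Qed.

Definition Nf (i : nat) : nat := match fb i with Some _ => 1%nat | None => Nn i end.

Fixpoint D (i : nat) : nat := match i with O => 1%nat | S i' => (D i' * Nf (S i'))%nat end.

Definition choice (P : nat -> Z) (i : nat) : nat := Z.to_nat (Z.modulo (P i) (Z.of_nat (Nn i))).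

Lemma choice_lt P i : (1 <= i)%nat -> (choice P i < Nn i)%nat.
Proof.
  intro Hi. unfold choice. pose proof (Nn_pos i Hi).
  pose proof (Z.mod_pos_bound (P i) (Z.of_nat (Nn i)) ltac:(lia)). lia.
Qed.

Definition dig (P : nat -> Z) (i : nat) : nat :=
  match fb i with
  | Some j => (c (bs j) + 2 * choice P (bs j) + (i - bs j))%nat
  | None => (c i + 2 * choice P i)%nat
  end.

Lemma dig_ge2 P i : (2 <= dig P i)%nat.
Proof. unfold dig. destruct (fb i) as [j|]; pose proof (c_ge2 i). pose proof (c_ge2 (bs j)). lia. lia. Qed.

Lemma dig_free P i : fb i = None -> dig P i = (c i + 2 * choice P i)%nat.
Proof. intro H. unfold dig. rewrite H. auto. Qed.

Lemma dig_ub P i : (1 <= i)%nat -> (dig P i + 1 <= c (S i))%nat.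
Proof.
  intro Hi. unfold dig. destruct (fb i) as [j|] eqn:E.
  - apply fb_some in E. unfold inblk in E. set (n := bs j) in *.
    assert (Hn : (1 <= n)%nat) by (pose proof (bs_ge j); unfold n; lia).
    pose proof (choice_lt P n Hn).
    pose proof (c_lin (S n) (i - S n) ltac:(lia)). replace (S n + (i - S n))%nat with i in H0 by lia.
    cbn [c] in H0. pose proof (c_mono i (S i) ltac:(lia)). lia.
  - pose proof (choice_lt P i Hi). cbn [c]. lia.
Qed.

Lemma dig_incr P i : (1 <= i)%nat -> (dig P i < dig P (S i))%nat.
Proof.
  intro Hi. destruct (fb (S i)) as [j|] eqn:E.
  - pose proof (fb_some _ _ E) as Hb. unfold inblk in Hb.
    unfold dig at 2. rewrite E.
    destruct (Nat.eq_dec (bs j) i) as [Eq|Ne].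
    + rewrite <- Eq. rewrite dig_free by apply fb_start. lia.
    + assert (fb i = Some j) by (apply fb_inblk; unfold inblk; lia).
      unfold dig. rewrite H. lia.
  - rewrite (dig_free P (S i) E). pose proof (dig_ub P i Hi). lia.
Qed.

Lemma dig_blk P j r : (r < nu (bs j))%nat ->
  dig P (bs j + r) = (c (bs j) + 2 * choice P (bs j) + r)%nat.
Proof.
  intro Hr. destruct r.
  - rewrite Nat.add_0_r, (dig_free P (bs j) (fb_start j)). lia.
  - unfold dig. rewrite (fb_inblk (bs j + S r) j) by (unfold inblk; lia). lia.
Qed.

Lemma dig_local P P' i : (forall l, (l <= i)%nat -> P l = P' l) -> dig P i = dig P' i.
Proof.
  intro H. unfold dig, choice. destruct (fb i) eqn:E.
  - apply fb_some in E. unfold inblk in E. rewrite H by lia. auto.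
  - rewrite H by lia. auto.
Qed.

Lemma Nf_pos i : (1 <= i)%nat -> (1 <= Nf i)%nat.
Proof. intro H. unfold Nf. destruct (fb i). lia. apply Nn_pos; auto. Qed.

Lemma D_pos i : (1 <= D i)%nat.
Proof. induction i. simpl. lia. simpl. pose proof (Nf_pos (S i) ltac:(lia)). nia. Qed.

Definition Pt (t : R) (i : nat) : Z := Int_part (t * INR (D i)).

Lemma Pt_S t i : (Pt t (S i) / Z.of_nat (Nf (S i)))%Z = Pt t i.
Proof.
  unfold Pt. simpl. rewrite mult_INR, <- Rmult_assoc. apply Int_part_div. apply Nf_pos. lia.
Qed.

Lemma Pt_0 t : 0 <= t < 1 -> Pt t 0 = 0%Z.
Proof. intro H. unfold Pt. simpl. apply Int_part_unique. simpl. lra. Qed.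

Lemma Pt_close t t' i : Pt t i = Pt t' i -> Rabs (t - t') < / INR (D i).
Proof.
  intro E. unfold Pt in E. pose proof (Int_part_bounds (t * INR (D i))).
  pose proof (Int_part_bounds (t' * INR (D i))). rewrite E in *.
  assert (HD : 0 < INR (D i)) by (apply lt_0_INR; pose proof (D_pos i); lia).
  assert (Rabs ((t - t') * INR (D i)) < 1) by (apply Rabs_def1; nra).
  rewrite Rabs_mult, (Rabs_pos_eq (INR (D i))) in H1 by lra.
  apply (Rmult_lt_reg_r (INR (D i))). auto. rewrite Rinv_l; lra.
Qed.

Lemma D_mono i l : (i <= l)%nat -> (D i <= D l)%nat.
Proof. intro H. induction H. lia. simpl. pose proof (Nf_pos (S m) ltac:(lia)). nia. Qed.

Lemma D_large j : (j < D (bs j))%nat.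
Proof.
  pose proof (bs_ge j). destruct (bs j) as [|n] eqn:E. lia.
  simpl. pose proof (D_pos n). unfold Nf.
  rewrite <- E, fb_start, E. unfold Nn.
  pose proof (Nat.pow_le_mono_r (S n) 1 M ltac:(lia) HM). rewrite Nat.pow_1_r in H1. nia.
Qed.

Lemma least_nat (P : nat -> Prop) : (forall n, P n \/ ~ P n) ->
  forall n, P n -> exists m, P m /\ forall k, (k < m)%nat -> ~ P k.
Proof.
  intros Hd n. induction n as [n IH] using lt_wf_ind. intro Hn.
  destruct (Classical_Prop.classic (exists k, (k < n)%nat /\ P k)) as [[k [Hk Pk]]|Hno].
  - apply (IH k Hk Pk).
  - exists n. split; auto. intros k Hk Pk. apply Hno. eauto.
Qed.

Definition gmap (t : R) : R := yv (dig (Pt t)) 0.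

Fixpoint Lsum (B : nat -> R) (n : nat) : R :=
  match n with O => 0 | S n' => Lsum B n' + ln (B (S n')) end.

Lemma prodR_shift f j d : prodR f j (S d) = prodR f j d * f (S (j + d)).
Proof.
  revert j; induction d; intro j. simpl. rewrite Nat.add_0_r. ring.
  change (prodR f j (S (S d))) with (f (S j) * prodR f (S j) (S d)).
  rewrite IHd. simpl. replace (S (j + S d)) with (S (S (j + d))) by lia. ring.
Qed.

Lemma ln_prodR (B : nat -> R) k : (forall i, 0 < B i) ->
  ln (prodR (fun i => / (B i * B i)) 0 k) = -2 * Lsum B k.
Proof.
  intro HB. induction k. simpl. rewrite ln_1. ring.
  rewrite prodR_shift. simpl.
  rewrite ln_mult. rewrite IHk. rewrite ln_Rinv, ln_mult. ring.
  apply HB. apply HB. apply Rmult_lt_0_compat; apply HB.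
  apply prodR_pos. intro i. apply Rinv_0_lt_compat, Rmult_lt_0_compat; apply HB.
  apply Rinv_0_lt_compat, Rmult_lt_0_compat; apply HB.
Qed.

Definition Bc (i : nat) : R := INR (c (S i)).

Lemma Bc_ge2 i : 2 <= Bc i.
Proof. unfold Bc. apply INR_ge2. apply c_ge2. Qed.

Lemma gmap_F (nu0 : nat -> nat) (Hnu : forall n, nu n = S (nu0 n)) t : F_set nu0 (gmap t).
Proof.
  set (a := dig (Pt t)). assert (Ha : forall i, (2 <= a i)%nat) by apply dig_ge2.
  unfold gmap. fold a. split.
  - split. pose proof (yv_pos a Ha 0). pose proof (yv_range a Ha 0). lra.
    split. apply yv_irrational; auto.
    intros n Hn. rewrite !cf_digit_yv by (auto; lia). rewrite Nat.add_1_r. apply dig_incr. auto.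
  - intro N. exists (bs N). pose proof (bs_ge N). split. lia. split. lia.
    intros i Hi. rewrite <- Nat.lt_succ_r, <- Hnu in Hi. rewrite !cf_digit_yv by (auto; lia).
    replace (bs N + i + 1)%nat with (bs N + (i + 1))%nat by lia.
    replace (bs N + i + 2)%nat with (bs N + (i + 2))%nat by lia.
    unfold a. rewrite !dig_blk by lia. lia.
Qed.


Definition ell (i : nat) : R := ln (INR i + 1).

Lemma ell_nonneg i : 0 <= ell i.
Proof. unfold ell. apply ln_ge0. pose proof (pos_INR i). lra. Qed.

Lemma ell_mono i l : (i <= l)%nat -> ell i <= ell l.
Proof. intro H. unfold ell. apply ln_le. pose proof (pos_INR i); lra. apply le_INR in H. lra. Qed.

Lemma ell_step i : ell (S i) - ell i <= ln 2.
Proof.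
  unfold ell. rewrite S_INR. pose proof (pos_INR i).
  assert (ln (INR i + 1 + 1) <= ln (2 * (INR i + 1))) by (apply ln_le; lra).
  rewrite ln_mult in H0 by lra. lra.
Qed.

Fixpoint Asum (k : nat) : R := match k with O => 0 | S k' => Asum k' + ell (S k') end.

Definition intb (i : nat) : R := match fb i with Some _ => 1 | None => 0 end.

Fixpoint Isum (k : nat) : R := match k with O => 0 | S k' => Isum k' + intb (S k') * ell (S k') end.

Lemma Asum_nonneg k : 0 <= Asum k.
Proof. induction k; simpl. lra. pose proof (ell_nonneg (S k)). lra. Qed.

Lemma Asum_mono k l : (k <= l)%nat -> Asum k <= Asum l.
Proof. intro H; induction H. lra. simpl. pose proof (ell_nonneg (S m)). lra. Qed.

Lemma Isum_le_Asum k : Isum k <= Asum k.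
Proof.
  induction k; simpl. lra. pose proof (ell_nonneg (S k)). unfold intb. destruct (fb (S k)); nra.
Qed.

Lemma c_bound i : (c (S i) <= 2 * (S i) ^ (S M))%nat.
Proof.
  induction i. change (c 1) with (2 + 2 * Nn 0)%nat. unfold Nn. rewrite Nat.pow_0_l, Nat.pow_1_l by lia. lia.
  change (c (S (S i))) with (c (S i) + 2 * Nn (S i))%nat. unfold Nn.
  pose proof (Nat.pow_le_mono_l (S i) (S (S i)) M ltac:(lia)).
  rewrite !Nat.pow_succ_r'. rewrite Nat.pow_succ_r' in IHi. set (a := (S i ^ M)%nat) in *. set (b := (S (S i) ^ M)%nat) in *.
  assert (S (S i) * a <= S (S i) * b)%nat by (apply Nat.mul_le_mono_l; auto). nia.
Qed.

Lemma ln_Bc i : (1 <= i)%nat -> ln (Bc i) <= (INR M + 2) * ell i.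
Proof.
  intro Hi. unfold Bc, ell.
  assert (H1 : INR (c (S i)) <= 2 * (INR i + 1) ^ (S M)).
  { pose proof (c_bound i) as H. apply le_INR in H. rewrite mult_INR, pow_INR in H. replace (INR 2) with 2 in H by (simpl; lra). rewrite S_INR in H. exact H. }
  assert (Hi' : 1 <= INR i) by (apply (le_INR 1); auto).
  assert (H2 : 0 < INR (c (S i))) by (pose proof (INR_ge2 _ (c_ge2 (S i))); lra).
  eapply Rle_trans. apply ln_le. auto. apply H1.
  rewrite ln_mult, ln_pow by (try apply pow_lt; lra). rewrite S_INR.
  assert (ln 2 <= ln (INR i + 1)) by (apply ln_le; lra).
  pose proof (ln_ge0 (INR i + 1) ltac:(lra)). nra.
Qed.

Lemma Lsum_bound k : Lsum Bc k <= (INR M + 2) * Asum k.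
Proof.
  induction k; simpl. lra. pose proof (ln_Bc (S k) ltac:(lia)). lra.
Qed.

Lemma LD_bound k : INR M * (Asum k - Isum k) - INR M * ln 2 * INR k <= ln (INR (D k)).
Proof.
  assert (HM' : 1 <= INR M) by (apply (le_INR 1); auto).
  induction k. simpl. rewrite ln_1. lra.
  change (D (S k)) with (D k * Nf (S k))%nat. rewrite mult_INR, ln_mult.
  2: { apply lt_0_INR. pose proof (D_pos k). lia. }
  2: { apply lt_0_INR. pose proof (Nf_pos (S k) ltac:(lia)). lia. }
  simpl Asum. simpl Isum. rewrite S_INR. unfold intb, Nf.
  destruct (fb (S k)).
  - change (INR 1) with 1. rewrite ln_1. pose proof ln_lt_2. nra.
  - unfold Nn. rewrite pow_INR, ln_pow by (apply lt_0_INR; lia).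
    assert (ell (S k) <= ln 2 + ln (INR (S k))).
    { unfold ell. rewrite <- ln_mult by (try apply lt_0_INR; try lia; lra).
      apply ln_le. rewrite S_INR; pose proof (pos_INR k); lra. rewrite S_INR. pose proof (pos_INR k). lra. }
    nra.
Qed.


Lemma Asum_shift_ub n d : Asum (n + d) - Asum n <= INR d * ell (n + d).
Proof.
  induction d. rewrite Nat.add_0_r. simpl. lra.
  replace (n + S d)%nat with (S (n + d)) by lia. simpl Asum. rewrite S_INR.
  pose proof (ell_mono (n + d) (S (n + d)) ltac:(lia)). pose proof (ell_nonneg (n + d)).
  pose proof (pos_INR d). nra.
Qed.

Lemma Asum_shift_lb r d : INR d * ell (S r) <= Asum (r + d) - Asum r.
Proof.
  induction d. rewrite Nat.add_0_r. simpl. lra.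
  replace (r + S d)%nat with (S (r + d)) by lia. simpl Asum. rewrite S_INR.
  pose proof (ell_mono (S r) (S (r + d)) ltac:(lia)). lra.
Qed.

Lemma Asum_ub k : Asum k <= INR k * ell k.
Proof. pose proof (Asum_shift_ub 0 k). simpl in H. lra. Qed.

Lemma Isum_le_E k E : (forall i, (1 <= i <= k)%nat -> fb i <> None -> (i < E)%nat) ->
  Isum k <= INR E * ell k.
Proof.
  induction k; intro H. simpl. pose proof (ell_nonneg 0). pose proof (pos_INR E). nra.
  simpl Isum. unfold intb. destruct (fb (S k)) eqn:Ef.
  - assert (HE : (S k < E)%nat) by (apply H; [lia|congruence]).
    pose proof (Isum_le_Asum k). pose proof (Asum_ub k).
    pose proof (ell_mono k (S k) ltac:(lia)). pose proof (ell_nonneg k).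
    apply lt_INR in HE. rewrite S_INR in HE. pose proof (pos_INR k). nra.
  - assert (Isum k <= INR E * ell k) by (apply IHk; intros; apply H; auto; lia).
    pose proof (ell_mono k (S k) ltac:(lia)). pose proof (pos_INR E). nra.
Qed.

Lemma blk_internal_sum j d : (d < nu (bs j))%nat ->
  Isum (bs j + d) - Isum (bs j) = Asum (bs j + d) - Asum (bs j).
Proof.
  induction d; intro Hd. rewrite Nat.add_0_r. ring.
  replace (bs j + S d)%nat with (S (bs j + d)) by lia. cbn [Isum Asum].
  unfold intb. rewrite (fb_inblk (S (bs j + d)) j) by (unfold inblk; lia).
  pose proof (IHd ltac:(lia)). lra.
Qed.

Definition Eprev (j : nat) : nat := match j with O => O | S j' => (bs j' + nu (bs j'))%nat end.

Lemma internal_before j i : (1 <= i <= bs j)%nat -> fb i <> None -> (i < Eprev j)%nat.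
Proof.
  intros Hi Hf. destruct (fb i) as [j'|] eqn:E; [|congruence].
  apply fb_some in E. unfold inblk in E.
  assert (Hjj : (j' < j)%nat) by (apply bs_inj_lt; lia).
  destruct j as [|j'']. lia. simpl.
  destruct (Nat.eq_dec j' j''). subst; lia. pose proof (bs_lt j' j'' ltac:(lia)). lia.
Qed.

Section Ineq.
Variables s0 beta : R.
Hypothesis Hs0 : 0 <= s0.
Hypothesis Hbeta : 0 <= beta.
Hypothesis Hrho : 5 <= INR M * (1 - 2 * s0 * (1 + beta)).
Hypothesis Hlen : forall j, INR (nu (bs j)) <= beta * INR (bs j).
Hypothesis Hsep : forall j, (M * Eprev j <= bs j)%nat.

Definition sig : R := 2 * s0 * (INR M + 2).
Definition Wc : R := INR M * ln (INR M) + sig * beta * ln (1 + beta) + INR M * ln 2 * (1 + beta).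
Hypothesis Hbig : forall j, Wc <= ell (bs j).

Definition G (k : nat) : R :=
  (INR M - sig) * Asum k - INR M * Isum k - sig * ell (S k) - INR M * ln 2 * INR k.

Lemma HMr : 1 <= INR M.
Proof. apply (le_INR 1). auto. Qed.

Lemma sig_bound : 3 <= INR M - sig.
Proof.
  pose proof HMr. unfold sig.
  assert (2 * s0 <= 2 * s0 * (1 + beta)) by nra.
  assert (2 * s0 * (INR M + 2) <= 2 * s0 * (1 + beta) * (INR M + 2)) by nra.
  nra.
Qed.

Lemma gamma_bound : 1 <= (INR M - sig) * (1 - / INR M) - 1 - sig * beta.
Proof.
  pose proof HMr. pose proof sig_bound.
  assert (E : (INR M - sig) * (1 - / INR M) = INR M - sig - 1 + sig / INR M) by (field; lra).
  rewrite E.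
  assert (0 <= sig / INR M) by (unfold sig; apply Rdiv_le_0_compat; nra).
  assert (sig * (1 + beta) = 2 * s0 * (1 + beta) * (INR M + 2)) by (unfold sig; ring).
  nra.
Qed.

Lemma Wc_nonneg : 0 <= Wc.
Proof.
  pose proof HMr. pose proof sig_bound. unfold Wc.
  pose proof (ln_ge0 (INR M) H). pose proof (ln_ge0 (1 + beta) ltac:(lra)).
  assert (0 <= sig) by (unfold sig; nra). pose proof ln_lt_2.
  assert (0 <= INR M * ln (INR M)) by (apply Rmult_le_pos; lra).
  assert (0 <= sig * beta * ln (1 + beta)) by (apply Rmult_le_pos; [apply Rmult_le_pos|]; lra).
  assert (0 <= INR M * ln 2 * (1 + beta)) by (apply Rmult_le_pos; [apply Rmult_le_pos|]; lra).
  lra.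
Qed.

Lemma Wc_ge : INR M * ln (INR M) <= Wc.
Proof.
  pose proof HMr. pose proof sig_bound. unfold Wc.
  pose proof (ln_ge0 (INR M) H). pose proof (ln_ge0 (1 + beta) ltac:(lra)).
  assert (0 <= sig) by (unfold sig; nra). pose proof ln_lt_2.
  assert (0 <= sig * beta * ln (1 + beta)) by (apply Rmult_le_pos; [apply Rmult_le_pos|]; lra).
  assert (0 <= INR M * ln 2 * (1 + beta)) by (apply Rmult_le_pos; [apply Rmult_le_pos|]; lra).
  lra.
Qed.

Lemma block_G j d : (0 < d < nu (bs j))%nat -> 0 <= G (bs j + d).
Proof.
  intros Hd. set (n := bs j) in *. set (k := (n + d)%nat).
  set (nv := nu n) in *.
  pose proof HMr as HM1. pose proof sig_bound as Hsg. pose proof gamma_bound as Hgam.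
  assert (Hsig0 : 0 <= sig) by (unfold sig; nra).
  assert (Hn1 : (1 <= n)%nat) by (unfold n; pose proof (bs_ge j); lia).
  assert (HN : 1 <= INR n) by (apply (le_INR 1); auto).
  set (x := ell n).
  assert (Hx : Wc <= x) by apply Hbig.
  pose proof Wc_nonneg as HW0.
  assert (HI : Isum k - Isum n = Asum k - Asum n).
  { unfold k, n. apply blk_internal_sum. fold n. fold nv. lia. }
  assert (HS : Asum k - Asum n + ell (S k) <= INR nv * (ln (1 + beta) + x)).
  { pose proof (Asum_shift_ub n d) as A. fold k in A.
    pose proof (ell_mono k (S k) ltac:(lia)).
    assert (ell (S k) <= ell (n + nv)) by (apply ell_mono; unfold k; lia).
    assert (ell (n + nv) <= ln (1 + beta) + x).
    { unfold x, ell. rewrite <- ln_mult by (pose proof (pos_INR n); lra).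
      apply ln_le. pose proof (pos_INR (n + nv)); lra.
      rewrite plus_INR. pose proof (Hlen j). fold n nv in H1. nra. }
    pose proof (ell_nonneg (S k)). pose proof (ell_nonneg k).
    assert (Hdn : INR d + 1 <= INR nv) by (rewrite <- S_INR; apply le_INR; lia).
    assert (INR d * ell k <= INR d * ell (S k)) by (apply Rmult_le_compat_l; auto; apply pos_INR).
    assert (0 <= ln (1 + beta) + x) by (pose proof (ell_nonneg (n + nv)); lra).
    assert ((INR d + 1) * ell (S k) <= INR nv * ell (S k)) by (apply Rmult_le_compat_r; lra).
    assert (INR nv * ell (S k) <= INR nv * (ln (1 + beta) + x)) by (apply Rmult_le_compat_l; [apply pos_INR|lra]).
    nra. }
  assert (Hnv : INR nv <= beta * INR n) by apply Hlen.
  assert (Hk : INR k <= (1 + beta) * INR n).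
  { unfold k. rewrite plus_INR. assert (INR d <= INR nv) by (apply le_INR; lia). lra. }
  assert (HIn : INR M * Isum n <= INR n * x).
  { pose proof (Isum_le_E n (Eprev j) (internal_before j)) as A.
    pose proof (Hsep j) as B. apply le_INR in B. rewrite mult_INR in B.
    pose proof (ell_nonneg n). fold x in A, H.
    assert (INR M * Isum n <= INR M * (INR (Eprev j) * x)) by (apply Rmult_le_compat_l; lra).
    assert ((INR M * INR (Eprev j)) * x <= INR n * x) by (apply Rmult_le_compat_r; auto).
    rewrite Rmult_assoc in H1. lra. }
  set (r := (n / M)%nat).
  assert (Hr1 : (M * r <= n)%nat) by (apply Nat.Div0.mul_div_le).
  assert (Hr2 : (n < M * (S r))%nat).
  { unfold r. pose proof (Nat.div_mod n M ltac:(lia)). pose proof (Nat.mod_upper_bound n M ltac:(lia)). lia. }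
  assert (Hrn : (r <= n)%nat) by nia.
  assert (HlnM : ell (S r) >= x - ln (INR M)).
  { unfold x, ell. assert (ln (INR n + 1) <= ln (INR M * (INR (S r) + 1))).
    { apply ln_le. lra. apply lt_INR in Hr2. rewrite mult_INR in Hr2. rewrite !S_INR in *. nra. }
    rewrite ln_mult in H by (pose proof (pos_INR (S r)); lra). lra. }
  assert (Hx0 : 0 <= x - ln (INR M)).
  { pose proof (ln_ge0 (INR M) HM1). pose proof Wc_ge.
    assert (INR M * ln (INR M) >= 1 * ln (INR M)) by (apply Rle_ge, Rmult_le_compat_r; lra). lra. }
  assert (HAn : INR (n - r) * (x - ln (INR M)) <= Asum n).
  { pose proof (Asum_shift_lb r (n - r)). replace (r + (n - r))%nat with n in H by lia.
    pose proof (Asum_nonneg r).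
    assert (INR (n - r) * (x - ln (INR M)) <= INR (n - r) * ell (S r)) by (apply Rmult_le_compat_l; [apply pos_INR|lra]).
    lra. }
  assert (Hnr : INR n * (1 - / INR M) <= INR (n - r)).
  { rewrite minus_INR by lia. apply le_INR in Hr1. rewrite mult_INR in Hr1.
    assert (INR r <= INR n / INR M).
    { apply (Rmult_le_reg_l (INR M)). lra. replace (INR M * (INR n / INR M)) with (INR n) by (field; lra). lra. }
    unfold Rdiv in H. lra. }
  set (P := (INR M - sig) * (1 - / INR M)).
  assert (HP0 : 0 <= P).
  { unfold P. apply Rmult_le_pos. lra. assert (/ INR M <= 1) by (rewrite <- Rinv_1; apply Rinv_le_contravar; lra). lra. }
  assert (HPM : P <= INR M).
  { unfold P. assert (0 < / INR M) by (apply Rinv_0_lt_compat; lra). nra. }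
  assert (HA1 : P * INR n * (x - ln (INR M)) <= (INR M - sig) * Asum n).
  { assert (A1 : INR n * (1 - / INR M) * (x - ln (INR M)) <= INR (n - r) * (x - ln (INR M)))
      by (apply Rmult_le_compat_r; lra).
    assert (A2 : (INR M - sig) * (INR n * (1 - / INR M) * (x - ln (INR M))) <=
                 (INR M - sig) * (INR (n - r) * (x - ln (INR M)))) by (apply Rmult_le_compat_l; lra).
    assert (A3 : (INR M - sig) * (INR (n - r) * (x - ln (INR M))) <= (INR M - sig) * Asum n)
      by (apply Rmult_le_compat_l; lra).
    assert (E : P * INR n * (x - ln (INR M)) = (INR M - sig) * (INR n * (1 - / INR M) * (x - ln (INR M))))
      by (unfold P; ring).
    lra. }
  assert (HG : G k = (INR M - sig) * Asum n - INR M * Isum n - sig * (Asum k - Asum n + ell (S k))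
                     - INR M * ln 2 * INR k).
  { unfold G. replace (Isum k) with (Isum n + (Asum k - Asum n)) by lra. ring. }
  rewrite HG.
  assert (T1 : sig * (Asum k - Asum n + ell (S k)) <= sig * (beta * INR n) * (ln (1 + beta) + x)).
  { assert (0 <= ln (1 + beta) + x) by (pose proof (ln_ge0 (1+beta) ltac:(lra)); unfold x; pose proof (ell_nonneg n); lra).
    rewrite Rmult_assoc. apply Rmult_le_compat_l. auto.
    eapply Rle_trans. apply HS. apply Rmult_le_compat_r; auto. }
  assert (T2 : INR M * ln 2 * INR k <= INR M * ln 2 * ((1 + beta) * INR n)).
  { apply Rmult_le_compat_l. pose proof ln_lt_2. nra. auto. }
  assert (T3 : P * INR n * ln (INR M) <= INR M * INR n * ln (INR M)).
  { pose proof (ln_ge0 (INR M) HM1). apply Rmult_le_compat_r; auto. apply Rmult_le_compat_r; lra. }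
  assert (Hgx : INR n * x <= INR n * x * (P - 1 - sig * beta)).
  { assert (0 <= INR n * x) by (apply Rmult_le_pos; [lra| unfold x; apply ell_nonneg]). fold P in Hgam. nra. }
  assert (Hfin : INR n * Wc <= INR n * x) by (apply Rmult_le_compat_l; lra).
  unfold Wc in Hfin.
  nra.
Qed.


Definition Tk : R := (sig + INR M) * ln 2 / (INR M - sig).

Lemma G_step k : fb (S k) = None -> Tk <= ell (S k) -> G k <= G (S k).
Proof.
  intros Hf HT. pose proof sig_bound. pose proof (ell_step (S k)).
  assert (HT' : (INR M - sig) * Tk = (sig + INR M) * ln 2) by (unfold Tk; field; lra).
  assert ((INR M - sig) * Tk <= (INR M - sig) * ell (S k)) by (apply Rmult_le_compat_l; lra).
  unfold G. cbn [Asum Isum]. unfold intb. rewrite Hf. rewrite S_INR.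
  assert (0 <= sig) by (unfold sig; pose proof HMr; nra).
  nra.
Qed.

Lemma ell_large (T : R) : exists k0, (1 <= k0)%nat /\ forall k, (k0 <= k)%nat -> T <= ell k.
Proof.
  destruct (INR_unbounded (exp T)) as [k0 Hk0].
  exists (S k0). split. lia. intros k Hk. unfold ell.
  rewrite <- (ln_exp T). apply ln_le. apply exp_pos.
  apply le_INR in Hk. rewrite S_INR in Hk. lra.
Qed.

Lemma G_lower : exists C, 0 <= C /\ forall k, - C <= G k.
Proof.
  destruct (ell_large Tk) as [k0 [Hk01 Hk0]].
  pose proof sig_bound as Hsg. pose proof HMr as HM1.
  assert (Hsig0 : 0 <= sig) by (unfold sig; nra).
  exists (sig * Asum k0 + INR M * ln 2 * INR k0). split.
  { pose proof (Asum_nonneg k0). pose proof (pos_INR k0). pose proof ln_lt_2.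
    assert (0 <= sig * Asum k0) by (apply Rmult_le_pos; lra).
    assert (0 <= INR M * ln 2 * INR k0) by (apply Rmult_le_pos; [apply Rmult_le_pos|]; lra). lra. }
  intro k. induction k as [k IH] using lt_wf_ind.
  destruct (le_lt_dec k0 k) as [Hge|Hlt].
  - destruct k as [|k']. lia.
    destruct (fb (S k')) as [j|] eqn:Ef.
    + apply fb_some in Ef. unfold inblk in Ef.
      replace (S k') with (bs j + (S k' - bs j))%nat by lia.
      pose proof (block_G j (S k' - bs j) ltac:(lia)).
      pose proof (Asum_nonneg k0). pose proof (pos_INR k0). pose proof ln_lt_2.
      assert (0 <= sig * Asum k0) by (apply Rmult_le_pos; lra).
      assert (0 <= INR M * ln 2 * INR k0) by (apply Rmult_le_pos; [apply Rmult_le_pos|]; lra). lra.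
    + pose proof (G_step k' Ef (Hk0 (S k') Hge)). pose proof (IH k' ltac:(lia)). lra.
  - unfold G.
    pose proof (Isum_le_Asum k).
    assert (HA : Asum (S k) <= Asum k0) by (apply Asum_mono; lia).
    simpl in HA.
    assert (Hk : INR k <= INR k0) by (apply le_INR; lia).
    assert (sig * (Asum k + ell (S k)) <= sig * Asum k0) by (apply Rmult_le_compat_l; lra).
    assert (INR M * (Asum k - Isum k) >= 0) by (apply Rle_ge, Rmult_le_pos; lra).
    assert (INR M * ln 2 * INR k <= INR M * ln 2 * INR k0) by (apply Rmult_le_compat_l; pose proof ln_lt_2; [apply Rmult_le_pos|]; lra).
    nra.
Qed.

Theorem counting_ineq : exists C, 0 <= C /\
  forall k, 2 * s0 * Lsum Bc (S k) <= C + ln (INR (D k)).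
Proof.
  destruct G_lower as [C [HC HG]]. exists C. split; auto. intro k.
  pose proof (Lsum_bound (S k)). pose proof (LD_bound k). pose proof (HG k).
  assert (2 * s0 * Lsum Bc (S k) <= 2 * s0 * ((INR M + 2) * Asum (S k))) by (apply Rmult_le_compat_l; lra).
  unfold G, sig in *. simpl Asum in *. nra.
Qed.

End Ineq.

Variable s C : R.
Hypothesis Hs : 0 <= s.
Hypothesis HC : 0 <= C.
Hypothesis Hineq : forall k, 2 * s * Lsum Bc (S k) <= C + ln (INR (D k)).

Lemma holder t t' : 0 <= t < 1 -> 0 <= t' < 1 ->
  Rabs (t - t') <= exp C * rpow (Rabs (gmap t - gmap t')) s.
Proof.
  intros Ht Ht'.
  destruct (Req_dec t t') as [E|Ne].
  { subst. rewrite Rminus_diag, Rabs_R0. pose proof (rpow_nonneg (Rabs (gmap t' - gmap t')) s).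
    pose proof (exp_pos C). nra. }
  assert (Hex : exists j, Pt t (bs j) <> Pt t' (bs j)).
  { assert (Hd : 0 < Rabs (t - t')) by (apply Rabs_pos_lt; lra).
    destruct (archimed (/ Rabs (t - t'))) as [Ha _].
    set (j := Z.to_nat (up (/ Rabs (t - t')))).
    exists j. intro E. apply Pt_close in E.
    pose proof (D_large j) as HDj. apply lt_INR in HDj.
    assert (INR j >= / Rabs (t - t')).
    { unfold j. rewrite INR_IZR_INZ. rewrite Z2Nat.id. lra.
      apply le_IZR. pose proof (Rinv_0_lt_compat _ Hd). lra. }
    assert (0 < INR j) by (pose proof (Rinv_0_lt_compat _ Hd); lra).
    assert (/ INR (D (bs j)) < Rabs (t - t')).
    { rewrite <- (Rinv_inv (Rabs (t - t'))). apply Rinv_lt_contravar.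
      apply Rmult_lt_0_compat. apply Rinv_0_lt_compat; auto. lra. lra. }
    lra. }
  destruct Hex as [j Hj].
  destruct (least_nat (fun n => Pt t n <> Pt t' n)
             ltac:(intro n; destruct (Z.eq_dec (Pt t n) (Pt t' n)); auto) (bs j) Hj)
    as [k0 [Hk0 Hmin]].
  destruct k0 as [|k].
  { rewrite !Pt_0 in Hk0 by auto. congruence. }
  assert (Heq : forall l, (l <= k)%nat -> Pt t l = Pt t' l).
  { intros l Hl. destruct (Z.eq_dec (Pt t l) (Pt t' l)); auto. exfalso. apply (Hmin l); auto. lia. }
  assert (Hfree : fb (S k) = None).
  { destruct (fb (S k)) eqn:E; auto. exfalso. apply Hk0.
    rewrite <- (Z.div_1_r (Pt t (S k))), <- (Z.div_1_r (Pt t' (S k))).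
    pose proof (Pt_S t k) as A1. pose proof (Pt_S t' k) as A2.
    unfold Nf in A1, A2. rewrite E in A1, A2. simpl in A1, A2.
    rewrite A1, A2. apply Heq. lia. }
  assert (Hch : choice (Pt t) (S k) <> choice (Pt t') (S k)).
  { intro E. apply Hk0. unfold choice in E.
    pose proof (Pt_S t k) as A1. pose proof (Pt_S t' k) as A2.
    unfold Nf in A1, A2. rewrite Hfree in A1, A2.
    pose proof (Nn_pos (S k) ltac:(lia)).
    assert (Hm1 := Z.mod_pos_bound (Pt t (S k)) (Z.of_nat (Nn (S k))) ltac:(lia)).
    assert (Hm2 := Z.mod_pos_bound (Pt t' (S k)) (Z.of_nat (Nn (S k))) ltac:(lia)).
    apply Z2Nat.inj in E; try lia.
    rewrite (Z.div_mod (Pt t (S k)) (Z.of_nat (Nn (S k)))) by lia.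
    rewrite (Z.div_mod (Pt t' (S k)) (Z.of_nat (Nn (S k)))) by lia.
    rewrite A1, A2, E, (Heq k) by lia. reflexivity. }
  assert (Hdist := dist_main (dig (Pt t)) (dig (Pt t'))
     (dig_ge2 (Pt t)) (dig_ge2 (Pt t')) Bc
     ltac:(intros i Hi; unfold Bc; rewrite <- S_INR; apply le_INR; pose proof (dig_ub (Pt t) i Hi); lia)
     ltac:(intros i Hi; unfold Bc; rewrite <- S_INR; apply le_INR; pose proof (dig_ub (Pt t') i Hi); lia)
     ltac:(intro i; pose proof (Bc_ge2 i); lra) k).
  assert (Hd2 : Rabs (gmap t - gmap t') >= prodR (fun i => / (Bc i * Bc i)) 0 k * / (Bc (S k) * Bc (S k))).
  { apply Rle_ge. apply Hdist.
    - intros i Hi. apply dig_local. intros l Hl. apply Heq. lia.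
    - rewrite !dig_free by auto.
      destruct (Nat.lt_total (choice (Pt t) (S k)) (choice (Pt t') (S k))) as [L|[L|L]]; [left; lia|tauto|right; lia]. }
  set (L := prodR (fun i => / (Bc i * Bc i)) 0 k * / (Bc (S k) * Bc (S k))) in *.
  assert (HBp : forall i, 0 < Bc i) by (intro i; pose proof (Bc_ge2 i); lra).
  assert (HL : 0 < L).
  { unfold L. apply Rmult_lt_0_compat. apply prodR_pos. intro i.
    apply Rinv_0_lt_compat, Rmult_lt_0_compat; apply HBp.
    apply Rinv_0_lt_compat, Rmult_lt_0_compat; apply HBp. }
  assert (HlnL : ln L = -2 * Lsum Bc (S k)).
  { unfold L. rewrite ln_mult, ln_prodR, ln_Rinv, ln_mult by (auto; try apply Rmult_lt_0_compat; auto;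
      try apply prodR_pos; try apply Rinv_0_lt_compat; try apply Rmult_lt_0_compat; auto;
      intro i; apply Rinv_0_lt_compat, Rmult_lt_0_compat; apply HBp).
    simpl. ring. }
  pose proof (Pt_close t t' k (Heq k (le_n _))) as Hclose.
  assert (HDk : 0 < INR (D k)) by (apply lt_0_INR; pose proof (D_pos k); lia).
  assert (HeC : 1 <= exp C) by (rewrite <- exp_0; apply exp_le; auto).
  destruct (Req_dec s 0) as [Hs0|Hs0].
  - unfold rpow. destruct (Req_EM_T s 0); [|tauto]. rewrite Rmult_1_r.
    assert (Rabs (t - t') < 1) by (apply Rabs_def1; lra). lra.
  - assert (HxL : L <= Rabs (gmap t - gmap t')) by lra.
    unfold rpow. destruct (Req_EM_T s 0); [tauto|].
    destruct (Req_EM_T (Rabs (gmap t - gmap t')) 0) as [E0|_]; [lra|].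
    assert (H1 : Rpower L s <= Rpower (Rabs (gmap t - gmap t')) s) by (apply Rle_Rpower_l; lra).
    assert (H2 : exp (- C - ln (INR (D k))) <= Rpower L s).
    { unfold Rpower. apply exp_le. rewrite HlnL. specialize (Hineq k). lra. }
    assert (H3 : exp (- C - ln (INR (D k))) = exp (- C) * / INR (D k)).
    { unfold Rminus. rewrite exp_plus, (exp_Ropp (ln _)), exp_ln; auto. }
    assert (H4 : exp C * exp (- C) = 1) by (rewrite <- exp_plus; replace (C + - C) with 0 by ring; apply exp_0).
    assert (H5 : / INR (D k) <= exp C * Rpower (Rabs (gmap t - gmap t')) s).
    { replace (/ INR (D k)) with (exp C * exp (- C - ln (INR (D k)))).
      apply Rmult_le_compat_l. lra. lra. rewrite H3, <- Rmult_assoc, H4. ring. }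
    lra.
Qed.



End Dig.

Lemma ell_large' (T : R) : exists k0, (1 <= k0)%nat /\ forall k, (k0 <= k)%nat -> T <= ell k.
Proof.
  destruct (INR_unbounded (exp T)) as [k0 Hk0].
  exists (S k0). split. lia. intros k Hk. unfold ell.
  rewrite <- (ln_exp T). apply ln_le. apply exp_pos.
  apply le_INR in Hk. rewrite S_INR in Hk. lra.
Qed.

Lemma construction (nu : nat -> nat) (a s : R) :
  0 <= a -> 0 <= s -> 2 * s * (1 + a) < 1 ->
  (forall eps, 0 < eps -> forall N, exists n, (N <= n)%nat /\ INR (nu (S n)) / INR (S n) < a + eps) ->
  hausdorff_measure s (F_set nu) <> Finite 0.
Proof.
  intros Ha Hs Hsa Hlim.
  set (rho0 := 1 - 2 * s * (1 + a)).
  set (delta := rho0 / (2 * (2 * s + 1))).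
  assert (Hrho0 : 0 < rho0) by (unfold rho0; lra).
  assert (Hdelta : 0 < delta) by (unfold delta; apply Rdiv_lt_0_compat; lra).
  set (beta := a + 2 * delta).
  assert (Hbeta : 0 <= beta) by (unfold beta; lra).
  set (rho := 1 - 2 * s * (1 + beta)).
  assert (Hrho : rho = rho0 / (2 * s + 1)).
  { unfold rho, beta, delta, rho0. field. lra. }
  assert (Hrho1 : 0 < rho) by (rewrite Hrho; apply Rdiv_lt_0_compat; lra).
  destruct (INR_unbounded (5 / rho)) as [M0 HM0].
  set (M := (M0 + 2)%nat).
  assert (HM : (2 <= M)%nat) by (unfold M; lia).
  assert (HMrho : 5 <= INR M * (1 - 2 * s * (1 + beta))).
  { fold rho. unfold M. rewrite plus_INR. simpl (INR 2).
    assert (5 / rho * rho = 5) by (field; lra).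
    assert (5 / rho * rho <= INR M0 * rho) by (apply Rmult_le_compat_r; lra).
    nra. }
  set (nu' := fun n => S (nu n)).
  set (W := Wc M s beta).
  set (Good := fun m => (1 <= m)%nat /\ INR (nu' m) <= beta * INR m /\ W <= ell m).
  assert (Hgood : forall N, exists m, (N <= m)%nat /\ Good m).
  { intro N. destruct (ell_large' W) as [k0 [_ Hk0]].
    destruct (INR_unbounded (/ delta)) as [k1 Hk1].
    destruct (Hlim delta Hdelta (N + k0 + k1)%nat) as [n [Hn Hu]].
    exists (S n). split. lia. split. lia. split.
    - unfold nu'. rewrite S_INR.
      assert (HS : 0 < INR (S n)) by (apply lt_0_INR; lia).
      assert (INR (nu (S n)) < (a + delta) * INR (S n)).
      { apply (Rmult_lt_compat_r (INR (S n))) in Hu; auto. unfold Rdiv in Hu.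
        rewrite Rmult_assoc, Rinv_l, Rmult_1_r in Hu; lra. }
      assert (INR k1 <= INR (S n)) by (apply le_INR; lia).
      assert (1 <= delta * INR (S n)).
      { assert (delta * / delta <= delta * INR (S n)) by (apply Rmult_le_compat_l; lra).
        rewrite Rinv_r in H1; lra. }
      unfold beta. nra.
    - apply Hk0. lia. }
  set (pick := fun N => epsilon (inhabits 0%nat) (fun m => (N <= m)%nat /\ Good m)).
  assert (Hpick : forall N, (N <= pick N)%nat /\ Good (pick N)).
  { intro N. unfold pick. apply epsilon_spec. apply Hgood. }
  set (bs := fix bs (j : nat) : nat := match j with
             | O => pick 1%nat
             | S j' => pick (M * (bs j' + nu' (bs j')))%nat end).
  assert (Hbs_S : forall j, bs (S j) = pick (M * (bs j + nu' (bs j)))%nat) by reflexivity.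
  assert (Hbs0 : (1 <= bs 0)%nat) by (apply (Hpick 1%nat)).
  assert (Hsep : forall j, (M * Eprev nu' bs j <= bs j)%nat).
  { intro j. destruct j. simpl. lia. simpl Eprev. rewrite Hbs_S. apply Hpick. }
  assert (Hbs : forall j, (bs j + nu' (bs j) < bs (S j))%nat).
  { intro j. pose proof (Hsep (S j)). simpl Eprev in H. unfold nu' in *. nia. }
  assert (HgoodJ : forall j, Good (bs j)).
  { intro j. destruct j. apply Hpick. rewrite Hbs_S. apply Hpick. }
  assert (HM1 : (1 <= M)%nat) by lia.
  destruct (counting_ineq M HM1 nu' bs Hbs Hbs0 s beta Hs Hbeta HMrho
              (fun j => proj1 (proj2 (HgoodJ j))) Hsep (fun j => proj2 (proj2 (HgoodJ j))))
    as [C [HC Hineq]].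
  apply (holder_positive (F_set nu) (gmap M nu' bs) (/2) (exp C) s).
  - lra.
  - apply exp_pos.
  - auto.
  - intros t Ht. apply (gmap_F M HM1 nu' bs Hbs Hbs0 nu). reflexivity.
  - intros t t' Ht Ht'. apply (holder M HM1 nu' bs Hbs Hbs0 s C Hs HC Hineq); lra.
Qed.

Theorem proposition4p1 (nu : nat -> nat)
  (hpos : forall n : nat, (1 <= n)%nat -> (0 < nu n)%nat)
  (hinc : forall n : nat, (1 <= n)%nat -> (nu n <= nu (S n))%nat) :
  Rbar_le
    (Finite (dim_bound (LimInf_seq (fun n : nat => INR (nu (S n)) / INR (S n)))))
    (hausdorff_dim (F_set nu)).
Proof.
  set (u := fun n : nat => INR (nu (S n)) / INR (S n)).
  assert (Hu : is_LimInf_seq u (LimInf_seq u)) by (unfold LimInf_seq; apply (proj2_sig (ex_LimInf_seq u))).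
  unfold hausdorff_dim. apply glb_greatest. intros x [s [Hs [Hx HH]]]. subst x.
  fold u. destruct (LimInf_seq u) as [a| |] eqn:EL; simpl; try lra.
  assert (Hlim : forall eps, 0 < eps -> forall N, exists n, (N <= n)%nat /\ u n < a + eps).
  { intros eps Heps. exact (proj1 (Hu (mkposreal eps Heps))). }
  assert (Ha : 0 <= a).
  { apply Rnot_lt_le. intro Hneg.
    destruct (Hlim (- a) ltac:(lra) 0%nat) as [n [_ Hn]].
    assert (0 <= u n). { unfold u. apply Rdiv_le_0_compat. apply pos_INR. apply lt_0_INR. lia. }
    lra. }
  apply Rnot_lt_le. intro Hlt.
  assert (Hsa : 2 * s * (1 + a) < 1).
  { assert (0 < 2 * (1 + a)) by lra.
    apply (Rmult_lt_compat_r (2 * (1 + a))) in Hlt; auto.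
    replace (1 / (2 * (1 + a)) * (2 * (1 + a))) with 1 in Hlt by (field; lra). lra. }
  apply (construction nu a s Ha Hs Hsa Hlim). auto.
Qed.
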